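(* Let $r\ge 3$ and $k\ge 2r+13$ be integers, and $m=\lfloor (k-1)/2\rfloor$. Let $\mathcal G$ be a nonempty $r$-graph containing no Berge-path of length $k$, in which every vertex has degree at least $\binom{m}{r-1}$. Then there is a longest Berge-path $u_1,f_1,u_2,\dots,f_l,u_{l+1}$ in $\mathcal G$, with set of defining hyperedges $\mathcal F=\{f_1,\dots,f_l\}$, such that $|N_{\mathcal G\setminus\mathcal F}(u_1)|\ge m$ and $|N_{\mathcal G\setminus\mathcal F}(u_{l+1})|\ge m$.
   Context: An $r$-graph is a simple $r$-uniform hypergraph; the degree of a vertex is the number of hyperedges containing it. A Berge-path of length $t$ is an alternating sequence $v_1,e_1,v_2,\dots,e_t,v_{t+1}$ of $t+1$ distinct vertices (the defining vertices) and $t$ distinct hyperedges (the defining hyperedges) with $\{v_i,v_{i+1}\}\subseteq e_i$ for all $i$. For a hypergraph $\mathcal K$ and vertex $v$, $N_{\mathcal K}(v)=\{u\neq v: \exists h\in E(\mathcal K),\ \{u,v\}\subseteq h\}$. $\mathcal G\setminus\mathcal F$ denotes the hypergraph on $V(\mathcal G)$ with hyperedge set $E(\mathcal G)\setminus\mathcal F$. *)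

(* Defs.v *)
From mathcomp Require Import all_boot.
Set Implicit Arguments. Unset Strict Implicit. Unset Printing Implicit Defensive.

Section Hyper.
Variable V : finType.

Definition is_rgraph (r : nat) (E : {set {set V}}) : Prop :=
  forall e, e \in E -> #|e| = r.

Definition degree (E : {set {set V}}) (v : V) : nat :=
  #|[set e in E | v \in e]|.

(* Berge-path with defining vertices x :: vs (v_1 = x) and defining
   hyperedges es; its length is size es. *)
Definition berge_path (E : {set {set V}}) (x : V) (vs : seq V)
    (es : seq {set V}) : Prop :=
  [/\ size vs = size es, uniq (x :: vs), uniq es, all (mem E) es &
      forall i, i < size es ->
        (nth x (x :: vs) i \in nth set0 es i) &&
        (nth x (x :: vs) i.+1 \in nth set0 es i)].

Definition nbhd (K : {set {set V}}) (v : V) : {set V} :=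
  [set u | (u != v) && [exists h in K, (u \in h) && (v \in h)]].

End Hyper.

(* Main.v *)
Require Import Defs.
From mathcomp Require Import all_boot zify.
From Stdlib Require Import Classical.
Set Implicit Arguments. Unset Strict Implicit. Unset Printing Implicit Defensive.

Definition bp {V : finType} (E : {set {set V}}) (s : seq V) (es : seq {set V}) : Prop :=
  [/\ size s = (size es).+1, uniq s, uniq es, all (mem E) es &
      forall y j, j < size es -> (nth y s j \in nth set0 es j) && (nth y s j.+1 \in nth set0 es j)].

Lemma bpE (V : finType) E (x : V) vs es : berge_path E x vs es <-> bp E (x::vs) es.
Proof.
split.
- case=> Hs Hu Hue Ha Hc; split => //=; first by rewrite Hs.
  move=> y j Hj.
  rewrite (@set_nth_default _ (x::vs) x y j); last by rewrite /= Hs; lia.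
  rewrite (@set_nth_default _ vs x y j); last by rewrite /= Hs; lia.
  exact: Hc.
- case=> /= [[Hs]] Hu Hue Ha Hc; split => //.
  move=> j Hj; exact: Hc.
Qed.

Lemma bp_rev (V : finType) E (s : seq V) es : bp E s es -> bp E (rev s) (rev es).
Proof.
case=> Hs Hu Hue Ha Hc; split.
- by rewrite !size_rev.
- by rewrite rev_uniq.
- by rewrite rev_uniq.
- by rewrite all_rev.
- move=> y j; rewrite size_rev => Hj.
  rewrite !nth_rev ?Hs; try lia.
  have := Hc y (size es - j.+1) ltac:(lia).
  have -> : (size es).+1 - j.+2 = size es - j.+1 by lia.
  have -> : (size es).+1 - j.+1 = (size es - j.+1).+1 by lia.
  by case/andP => -> ->.
Qed.

Lemma bp_take (V : finType) E (s : seq V) es n : bp E s es -> n <= size es ->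
  bp E (take n.+1 s) (take n es).
Proof.
case=> Hs Hu Hue Ha Hc Hn; split.
- rewrite size_takel ?Hs // size_takel //.
- exact: take_uniq.
- exact: take_uniq.
- apply/allP => e /mem_take He; exact: (allP Ha).
- move=> y j; rewrite size_takel // => Hj.
  rewrite !nth_take //; try lia. apply: Hc; lia.
Qed.

Lemma bp_rot (V : finType) E (s : seq V) es i y : bp E s es -> 0 < i < size es ->
  nth y s 0 \in nth set0 es i ->
  bp E (rev (take i.+1 s) ++ drop i.+1 s) (rev (take i es) ++ drop i es).
Proof.
case=> Hs Hu Hue Ha Hc /andP[Hi0 Hi] Hx.
have Hnv : forall z j, j < size s -> nth z (rev (take i.+1 s) ++ drop i.+1 s) j =
   if j <= i then nth z s (i - j) else nth z s j.
  move=> z j Hj; rewrite nth_cat size_rev size_takel; last lia.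
  case: ifP => Hji.
  - rewrite ifT; last lia. rewrite nth_rev ?size_takel; try lia.
    rewrite nth_take; last lia. congr nth; lia.
  - rewrite ifF; last lia. rewrite nth_drop; congr nth; lia.
have Hne : forall j, j < size es -> nth set0 (rev (take i es) ++ drop i es) j =
   if j < i then nth set0 es (i - j.+1) else nth set0 es j.
  move=> j Hj; rewrite nth_cat size_rev size_takel; last lia.
  case: ifP => Hji.
  - rewrite nth_rev ?size_takel; try lia.
    rewrite nth_take; last lia. by [].
  - rewrite nth_drop; congr nth; lia.
have Hsz : size (rev (take i es) ++ drop i es) = size es.
  by rewrite size_cat size_rev size_takel ?size_drop; lia.
split.
- rewrite size_cat size_rev size_takel ?size_drop; lia.
- have Hp : perm_eq (rev (take i.+1 s) ++ drop i.+1 s) (take i.+1 s ++ drop i.+1 s).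
    by rewrite perm_cat2r perm_rev.
  by rewrite (perm_uniq Hp) cat_take_drop.
- have Hp : perm_eq (rev (take i es) ++ drop i es) (take i es ++ drop i es).
    by rewrite perm_cat2r perm_rev.
  by rewrite (perm_uniq Hp) cat_take_drop.
- apply/allP => e; rewrite mem_cat mem_rev -mem_cat cat_take_drop; exact: (allP Ha).
- move=> z j; rewrite Hsz => Hj.
  rewrite Hne // !Hnv; try lia.
  case: (ltngtP j i) => Hji.
  + have := Hc z (i - j.+1) ltac:(lia).
    have -> : i - j = (i - j.+1).+1 by lia.
    by case/andP => -> ->.
  + exact: Hc.
  + rewrite Hji subnn.
    rewrite (@set_nth_default _ s y z 0) ?Hs // Hx /=.
    by case/andP: (Hc z i Hi).
Qed.

Lemma deg_split (V : finType) (r : nat) (E F : {set {set V}}) (x : V) :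
  is_rgraph r E -> F \subset E ->
  degree E x <= 'C(#|nbhd (E :\: F) x|, r.-1) + #|[set e in F | x \in e]|.
Proof.
move=> HE HF.
set O := [set e in E :\: F | x \in e].
have H1 : [set e in E | x \in e] \subset O :|: [set e in F | x \in e].
  apply/subsetP => e; rewrite !inE => /andP[He Hx]; rewrite Hx He !andbT.
  by case: (e \in F).
rewrite /degree; apply: leq_trans (subset_leq_card H1) _.
apply: leq_trans (leq_card_setU _ _) _; rewrite leq_add2r.
have Hinj : {in O &, injective (fun e => e :\ x)}.
  move=> e1 e2; rewrite !inE => /andP[_ H1x] /andP[_ H2x] Heq.
  by rewrite -(setD1K H1x) -(setD1K H2x) Heq.
rewrite -(card_in_imset Hinj) -cards_draws; apply: subset_leq_card.
apply/subsetP => A /imsetP[e He ->]; rewrite inE.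
move: He; rewrite !inE => /andP[/andP[HeF HeE] Hx].
apply/andP; split.
- apply/subsetP => v; rewrite !inE => /andP[Hvx Hv]; rewrite Hvx /=.
  apply/existsP; exists e; rewrite !inE HeF HeE Hv Hx.
  by [].
- have := cardsD1 x e; rewrite Hx (HE e HeE) => ->; by [].
Qed.

Lemma bin_low a b : 1 + a * b <= 'C(a + b, a).
Proof.
elim: a b => [|a IHa] b; first by rewrite bin0.
elim: b => [|b IHb]; first by rewrite addn0 binn muln0.
rewrite addnS binS.
have := IHa b.+1; rewrite -addSnnS => H2.
lia.
Qed.

Lemma card_sum (T : finType) (A : {set T}) (P : pred T) :
  #|[set e in A | P e]| = \sum_(e in A) P e.
Proof.
rewrite -sum1dep_card big_mkcondr /=; apply: eq_bigr => e _; by case: (P e).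
Qed.

Lemma dcount (V : finType) (r : nat) (F : {set {set V}}) (U : {set V}) x :
  (forall e, e \in F -> #|e| = r) -> x \notin U ->
  \sum_(v in U) #|[set e in F | v \in e]| + #|[set e in F | x \in e]| <= #|F| * r.
Proof.
move=> HF HxU.
rewrite (eq_bigr (fun v => \sum_(e in F) (v \in e))); last by move=> v _; rewrite card_sum.
rewrite exchange_big /= card_sum -big_split /= -sum_nat_const.
apply: leq_sum => e He.
rewrite -card_sum -(HF e He) (cardsD1 x e) addnC leq_add2l.
apply: subset_leq_card; apply/subsetP => v; rewrite !inE => /andP[HvU Hve].
rewrite Hve andbT; apply/eqP => Hvx; move: HvU; rewrite Hvx; by move/negP: HxU.
Qed.

Lemma arith a b : 1 <= a -> 7 <= b -> (2 * (a + b).+1 + 1) * a.+2 < (1 + a * b) * (1 + a * b).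
Proof.
move=> Ha Hb.
have [c ->] : exists c, b = c + 7 by exists (b - 7); lia.
have [d ->] : exists d, a = d + 1 by exists (a - 1); lia.
rewrite !mulnDl !mulnDr.
nia.
Qed.

Lemma step (V : finType) (E : {set {set V}}) a b (s : seq V) es y :
  is_rgraph a.+2 E -> 7 <= b -> 1 <= a -> bp E s es ->
  size es <= 2 * (a + b).+1 + 1 ->
  'C((a+b).+1, a.+1) <= degree E (nth y s 0) ->
  #|nbhd (E :\: [set e in es]) (nth y s 0)| < (a+b).+1 ->
  exists i, [/\ 0 < i < size es, nth y s 0 \in nth set0 es i &
     #|[set e in [set e0 in es] | nth y s i \in e]| <
     #|[set e in [set e0 in es] | nth y s 0 \in e]|].
Proof.
move=> HE Hb Ha Hbp Hl Hdeg Hbad.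
case: (Hbp) => Hs Hu Hue Hall Hc.
set x := nth y s 0 in Hdeg Hbad *.
set F := [set e0 in es] in Hbad *.
set In := [set e in F | x \in e].
have HF : F \subset E.
  apply/subsetP => e; rewrite inE => He; exact: (allP Hall).
have Hd := deg_split x HE HF.
have Ht : 'C(#|nbhd (E :\: F) x|, a.+1) <= 'C(a + b, a.+1).
  apply: leq_bin2l; lia.
have Hbl := bin_low a b.
have Hs1 : 1 + a * b <= #|In|.
  move: Hdeg; rewrite binS /= => Hdeg. have := leq_trans Hdeg (leq_trans Hd (leq_add Ht (leqnn _))). rewrite leq_add2l => H; exact: leq_trans Hbl H.
case: (classic (exists i, [/\ 0 < i < size es, x \in nth set0 es i &
     #|[set e in F | nth y s i \in e]| < #|In|])) => // Hno; exfalso.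
have Hge : forall i, 0 < i < size es -> x \in nth set0 es i ->
    #|In| <= #|[set e in F | nth y s i \in e]|.
  move=> i Hi Hxi; rewrite leqNgt; apply/negP => Hlt; apply: Hno; exists i; by split.
have Hidx : forall e, e \in F -> index e es < size es.
  by move=> e; rewrite inE index_mem.
set U := [set nth y s (index e es) | e in In :\ nth set0 es 0].
have Hinj : {in In :\ nth set0 es 0 &, injective (fun e => nth y s (index e es))}.
  move=> e1 e2; rewrite !inE => /andP[_ /andP[H1 _]] /andP[_ /andP[H2 _]] Heq.
  have H1' : index e1 es < size s by rewrite Hs; have := Hidx e1; rewrite inE; move/(_ H1); lia.
  have H2' : index e2 es < size s by rewrite Hs; have := Hidx e2; rewrite inE; move/(_ H2); lia.
  move/eqP: Heq; rewrite nth_uniq // => /eqP Heq.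
  by rewrite -(nth_index set0 H1) -(nth_index set0 H2) Heq.
have HU : #|U| = #|In :\ nth set0 es 0| by rewrite card_in_imset.
have HUc : #|In| <= #|U| + 1 by rewrite HU (cardsD1 (nth set0 es 0) In); case: (_ \in _); lia.
have HxU : x \notin U.
  apply/imsetP => [[e]]; rewrite !inE => /andP[Hne /andP[HeF _]] Heq.
  have H1' : index e es < size s by rewrite Hs; have := Hidx e; rewrite inE; move/(_ HeF); lia.
  move/eqP: Heq; rewrite eq_sym /x nth_uniq //; last by rewrite Hs.
  move/eqP => Hi0; move: Hne; by rewrite -Hi0 nth_index // eqxx.
have HUge : forall v, v \in U -> #|In| <= #|[set e in F | v \in e]|.
  move=> v /imsetP[e]; rewrite !inE => /andP[Hne /andP[HeF Hxe]] ->.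
  apply: Hge.
  - have := Hidx e; rewrite inE => /(_ HeF) ->; rewrite andbT lt0n.
    apply/negP => /eqP Hi0; move: Hne; by rewrite -Hi0 nth_index // eqxx.
  - by rewrite nth_index.
have Hrg : forall e, e \in F -> #|e| = a.+2.
  by move=> e /(subsetP HF); apply: HE.
have Hdc := dcount Hrg HxU.
have Hsum : #|U| * #|In| <= \sum_(v in U) #|[set e in F | v \in e]|.
  rewrite -sum_nat_const; apply: leq_sum => v Hv; exact: HUge.
have HFc : #|F| = size es by rewrite cardsE; apply/card_uniqP.
rewrite -/In HFc in Hdc.
have Hsq : #|In| * #|In| <= size es * a.+2.
  apply: leq_trans _ (leq_trans (leq_add Hsum (leqnn _)) Hdc).
  apply: leq_trans (leq_mul HUc (leqnn _)) _; by rewrite mulnDl mul1n.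
have Hsq2 := leq_mul Hs1 Hs1.
have := leq_trans Hsq2 (leq_trans Hsq (leq_mul Hl (leqnn _))).
by rewrite leqNgt (arith Ha Hb).
Qed.

Definition pot (V : finType) (x : V) (vs : seq V) (es : seq {set V}) :=
  #|[set e in [set e0 in es] | x \in e]| + #|[set e in [set e0 in es] | last x vs \in e]|.

Lemma last_drop (T : eqType) (vs : seq T) i y z : i < size vs ->
  last y (drop i vs) = last z vs.
Proof.
elim: vs i y z => [|v vs IH] [|i] y z //= Hi.
rewrite (IH i y v) //.
Qed.

Lemma improve (V : finType) (E : {set {set V}}) a b (x : V) vs es :
  is_rgraph a.+2 E -> 7 <= b -> 1 <= a -> berge_path E x vs es ->
  size es <= 2 * (a + b).+1 + 1 ->
  'C((a+b).+1, a.+1) <= degree E x ->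
  #|nbhd (E :\: [set e in es]) x| < (a+b).+1 ->
  exists x' vs' es', [/\ berge_path E x' vs' es', size es' = size es &
     pot x' vs' es' < pot x vs es].
Proof.
move=> HE Hb Ha /bpE Hbp Hl Hdeg Hbad.
have [i [Hi Hxi Hlt]] := step (y := x) HE Hb Ha Hbp Hl Hdeg Hbad.
have Hb' := bp_rot Hbp Hi Hxi.
case: (Hbp) => Hs _ _ _ _.
have Hi' : i < size (x :: vs) by rewrite Hs; lia.
rewrite (take_nth x Hi') rev_rcons /= in Hb'.
exists (nth x (x :: vs) i), (rev (take i (x :: vs)) ++ drop i vs), (rev (take i es) ++ drop i es).
have HF : [set e0 in rev (take i es) ++ drop i es] = [set e0 in es].
  by apply/setP => e; rewrite !inE mem_cat mem_rev -mem_cat cat_take_drop.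
split.
- by apply/bpE.
- rewrite size_cat size_rev size_takel ?size_drop; lia.
- rewrite /pot HF.
  have -> : last (nth x (x :: vs) i) (rev (take i (x :: vs)) ++ drop i vs) = last x vs.
    rewrite last_cat; apply: last_drop. move: Hs => /= [Hs]; lia.
  by rewrite ltn_add2r.
Qed.

Lemma bp_revE (V : finType) E (x : V) vs es : berge_path E x vs es ->
  berge_path E (last x vs) (rev (belast x vs)) (rev es).
Proof.
move/bpE/bp_rev; rewrite lastI rev_rcons; by move/bpE.
Qed.

Lemma last_rev_belast (V : eqType) (x : V) vs : last (last x vs) (rev (belast x vs)) = x.
Proof.
case: vs => [|v vs] //=; by rewrite rev_cons last_rcons.
Qed.

Lemma pot_rev (V : finType) (x : V) vs es :
  pot (last x vs) (rev (belast x vs)) (rev es) = pot x vs es.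
Proof.
rewrite /pot last_rev_belast addnC.
have -> : [set e0 in rev es] = [set e0 in es] by apply/setP => e; rewrite !inE mem_rev.
by [].
Qed.

Lemma path_size (V : finType) E (x : V) vs es : berge_path E x vs es -> size es < #|V|.
Proof.
case=> Hs Hu _ _ _.
have := max_card (mem (x :: vs)); rewrite (card_uniqP Hu) /= Hs. by [].
Qed.

Lemma ex_longest (V : finType) (E : {set {set V}}) (x0 : V) : exists x vs es, berge_path E x vs es /\
  forall x' vs' es', berge_path E x' vs' es' -> size es' <= size es.
Proof.
suff H : forall d x vs es, berge_path E x vs es -> #|V| - size es <= d ->
  exists x vs es, berge_path E x vs es /\
  forall x' vs' es', berge_path E x' vs' es' -> size es' <= size es.
  apply: (H #|V| x0 [::] [::]); last by rewrite subn0.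
  by split.
elim=> [|d IH] x vs es Hp Hd.
- have := path_size Hp; lia.
- case: (classic (exists x' vs' es', berge_path E x' vs' es' /\ size es < size es')).
  + move=> [x' [vs' [es' [Hp' Hlt]]]]; apply: (IH x' vs' es' Hp').
    have := path_size Hp'; lia.
  + move=> Hno; exists x, vs, es; split => // x' vs' es' Hp'.
    rewrite leqNgt; apply/negP => Hlt; apply: Hno; by exists x', vs', es'.
Qed.

Lemma size_lt_k (V : finType) E k : (forall (x : V) vs es, berge_path E x vs es -> size es <> k) ->
  forall x vs es, berge_path E x vs es -> size es < k.
Proof.
move=> Hk x vs es Hp; rewrite ltnNge; apply/negP => Hle.
move/bpE: Hp => /bp_take /(_ Hle) /= /bpE Hp'.
apply: (Hk _ _ _ Hp'); rewrite size_takel //.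
Qed.

Theorem claim1 (V : finType) (r k : nat) (E : {set {set V}}) :
  3 <= r -> 2 * r + 13 <= k ->
  is_rgraph r E ->
  0 < #|V| ->
  (forall x vs es, berge_path E x vs es -> size es <> k) ->
  (forall v : V, 'C((k - 1)./2, r - 1) <= degree E v) ->
  exists (x : V) (vs : seq V) (es : seq {set V}),
    [/\ berge_path E x vs es,
        (forall x' vs' es', berge_path E x' vs' es' -> size es' <= size es),
        (k - 1)./2 <= #|nbhd (E :\: [set e in es]) x|
      & (k - 1)./2 <= #|nbhd (E :\: [set e in es]) (last x vs)|].
Proof.
move=> Hr Hk HE HV Hnok Hdeg.
have [m Hm] : exists m, m = (k - 1)./2 by exists ((k - 1)./2).
rewrite -Hm in Hdeg *.
have Hm2 : m.*2 <= k - 1 <= m.*2 + 1.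
  have := odd_double_half (k - 1); rewrite -Hm; case: odd => /=; lia.
have [a Ha] : exists a, a = r - 2 by exists (r - 2).
have [b Hb] : exists b, b = m - r + 1 by exists (m - r + 1).
have Hra : r = a.+2 by lia.
have Hmab : m = (a + b).+1 by lia.
have Ha1 : 1 <= a by lia.
have Hb7 : 7 <= b by lia.
have HE' : is_rgraph a.+2 E by rewrite -Hra.
have Hdeg' : forall v, 'C((a + b).+1, a.+1) <= degree E v.
  move=> v; have := Hdeg v; rewrite Hmab Hra.
  by [].
have Hsz : forall x vs es, berge_path E x vs es -> size es <= 2 * (a + b).+1 + 1.
  move=> x vs es Hp; have := size_lt_k Hnok Hp; lia.
case/card_gt0P: HV => x0 _.
have [x [vs [es [Hp Hmax]]]] := ex_longest E x0.
suff H : forall n x1 vs1 es1, berge_path E x1 vs1 es1 -> size es1 = size es ->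
    pot x1 vs1 es1 < n ->
    exists (x : V) (vs : seq V) (es : seq {set V}),
    [/\ berge_path E x vs es,
        (forall x' vs' es', berge_path E x' vs' es' -> size es' <= size es),
        m <= #|nbhd (E :\: [set e in es]) x|
      & m <= #|nbhd (E :\: [set e in es]) (last x vs)|].
  exact: (H (pot x vs es).+1 x vs es Hp).
elim=> [|n IH] x1 vs1 es1 Hp1 HL Hpot //.
case: (leqP m #|nbhd (E :\: [set e in es1]) x1|) => H1.
- case: (leqP m #|nbhd (E :\: [set e in es1]) (last x1 vs1)|) => H2.
  + exists x1, vs1, es1; split => //.
    move=> x' vs' es' Hp'; rewrite HL. exact: (Hmax _ _ _ Hp').
  + have Hr1 := bp_revE Hp1.
    have Hbad : #|nbhd (E :\: [set e in rev es1]) (last x1 vs1)| < (a + b).+1.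
      have -> : [set e in rev es1] = [set e in es1] by apply/setP => e; rewrite !inE mem_rev.
      by rewrite -Hmab.
    have [x2 [vs2 [es2 [Hp2 Hs2 Hpot2]]]] := improve HE' Hb7 Ha1 Hr1 (Hsz _ _ _ Hr1) (Hdeg' _) Hbad.
    apply: (IH x2 vs2 es2 Hp2); first by rewrite Hs2 size_rev.
    rewrite pot_rev in Hpot2; lia.
- have Hbad : #|nbhd (E :\: [set e in es1]) x1| < (a + b).+1 by rewrite -Hmab.
  have [x2 [vs2 [es2 [Hp2 Hs2 Hpot2]]]] := improve HE' Hb7 Ha1 Hp1 (Hsz _ _ _ Hp1) (Hdeg' _) Hbad.
  apply: (IH x2 vs2 es2 Hp2); first by rewrite Hs2.
  lia.
Qed.
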